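(* Let $\Gamma$ be a tree of diameter four labeled as below and let $\ell=a_1+\cdots+a_n$. Then the Betti numbers of $Q/I_\Gamma$ over $Q$ are $\beta_0^Q=1$, $\beta_1^Q=\ell+n$, and $\beta_i^Q=\binom{\ell+1}{i}+\binom{n}{i}$ for $i>1$. In particular the projective dimension of $Q/I_\Gamma$ is $\max\{\ell+1,n\}$.
   Context: Every tree $\Gamma$ of diameter four (diameter = number of edges in a longest path) can be labeled with vertices $z,x_1,\ldots,x_n,y_{i,j}$ ($1\le i\le n$, $1\le j\le a_i$, integers $a_i\ge0$) so that its edges are $\{z,x_i\}$ and $\{x_i,y_{i,j}\}$. $Q$ is the polynomial ring over a field in these vertices and $I_\Gamma$ is the edge ideal (generated by $zx_i$ and $x_iy_{i,j}$). *)

(* Defs.v *)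
From HB Require Import structures.
From mathcomp Require Import all_boot all_order all_algebra.
Set Implicit Arguments. Unset Strict Implicit. Unset Printing Implicit Defensive.
Import Order.TTheory GRing.Theory Num.Theory.

(* Betti numbers of Q/I_G, Q = F[x_v | v in V], I_G the edge ideal of a      *)
(* simple graph G on the finite vertex set V (edge relation E).             *)
(* beta_i = dim_F Tor_i^Q(Q/I_G, F), computed as the homology of the Koszul *)
(* complex K(x_v ; Q/I_G), which is N^V-multigraded with finite-dimensional *)
(* pieces.  In multidegree d, K_i has F-basis the elements  m * e_S  with   *)
(* S a set of vertices, #|S| = i, m = x^(d - 1_S) a standard monomial       *)
(* (i.e. not in I_G, which for a monomial ideal generated by the x_u x_v,   *)
(* E u v, means: no edge u v with both exponents positive).  The Koszul     *)
(* differential is  m e_S |-> sum_{v in S} (-1)^{#{u in S | u < v}} x_v m   *)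
(* e_{S \ v}  (x_v m is zero in Q/I_G iff it is not standard).              *)

Section Koszul.
Variables (V : finType) (E : rel V).

Definition standard (d : V -> nat) : bool :=
  [forall u, forall v, ~~ [&& E u v, 0 < d u & 0 < d v]].

Definition kbasis (d : V -> nat) (S : {set V}) : bool :=
  (S \subset [set v | 0 < d v]) && standard (fun v => d v - (v \in S)).

Definition kcard (i : nat) (d : V -> nat) : nat :=
  #|[set S : {set V} | (#|S| == i) && kbasis d S]|.

(* matrix (row convention, indexed by all subsets of V, zero outside the  *)
(* basis) of the Koszul differential K_i -> K_(i-1) in multidegree d *)
Definition kdiff (F : fieldType) (i : nat) (d : V -> nat)
  : 'M[F]_#|{set V}| :=
  \matrix_(p, q)
    let S := (enum_val p : {set V}) in let T := (enum_val q : {set V}) in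
    if [&& #|S| == i, kbasis d S & kbasis d T] then
      (\sum_(v in S | T == S :\ v)
         (-1) ^+ #|[set u in S | (enum_rank u < enum_rank v)%N]|)%R
    else 0%R.

(* dim_F of the multidegree-d part of H_i(K(x; Q/I_G)) = Tor_i(Q/I_G,F)_d *)
Definition tor_dim (F : fieldType) (i : nat) (d : V -> nat) : nat :=
  kcard i d - \rank (kdiff F i d) - \rank (kdiff F i.+1 d).

Definition betti_partial (F : fieldType) (i N : nat) : nat :=
  \sum_(d : {ffun V -> 'I_N.+1}) tor_dim F i (fun v => d v).

(* beta_i^Q(Q/I_G) = b : the (nonnegative) sum over all multidegrees is b *)
Definition is_betti (F : fieldType) (i b : nat) : Prop :=
  exists N0, forall N, N0 <= N -> betti_partial F i N = b.

Definition is_projdim (F : fieldType) (p : nat) : Prop :=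
  (exists2 b, b != 0 & is_betti F p b) /\ (forall i, p < i -> is_betti F i 0).

End Koszul.

(* The tree with vertices z, x_i (i < n), y_(i,j) (i < n, j < a i) and      *)
(* edges {z, x_i}, {x_i, y_(i,j)}.                                         *)
(*   None            = z                                                    *)
(*   Some (inl i)    = x_i                                                  *)
(*   Some (inr (i,j)) = y_(i,j)                                             *)

Definition tvtx (n : nat) (a : 'I_n -> nat) : finType :=
  option ('I_n + {i : 'I_n & 'I_(a i)})%type.

Definition tree_edge (n : nat) (a : 'I_n -> nat) : rel (tvtx a) :=
  fun u v =>
    match u, v with
    | None, Some (inl _) => true
    | Some (inl _), None => true
    | Some (inl i), Some (inr p) => tag p == i
    | Some (inr p), Some (inl i) => tag p == i
    | _, _ => false
    end.

Arguments tree_edge {n} a u v.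

(* Main.v *)
Require Import Defs.
From HB Require Import structures.
From mathcomp Require Import all_boot all_order all_algebra.
From mathcomp Require Import zify.
From Stdlib Require Import FunctionalExtensionality.

Module Aux.
Set Implicit Arguments. Unset Strict Implicit. Unset Printing Implicit Defensive.
Import Order.TTheory GRing.Theory Num.Theory.

Section Gen.
Variables (V : finType) (E : rel V) (F : fieldType) (d : V -> nat).
Local Open Scope ring_scope.

Definition sg (S : {set V}) (v : V) := #|[set u in S | (enum_rank u < enum_rank v)%N]|.

Lemma kdiffE i S T : kdiff E F i d (enum_rank S) (enum_rank T) =
  if [&& #|S| == i, kbasis E d S & kbasis E d T] then
    \sum_(v in S | T == S :\ v) (-1) ^+ sg S v else 0.
Proof. by rewrite /kdiff mxE !enum_rankK. Qed.

Lemma sum_single (S : {set V}) v (f : V -> F) : v \in S ->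
  \sum_(w in S | S :\ v == S :\ w) f w = f v.
Proof.
move=> vS; rewrite (bigD1 v) ?vS ?eqxx //= big1 ?addr0 // => w /andP[/andP[wS /eqP e] wv].
have : v \in S :\ w by rewrite in_setD1 eq_sym wv.
by rewrite -e in_setD1 eqxx.
Qed.

Lemma sum_none (S T : {set V}) (f : V -> F) : (forall v, v \in S -> T != S :\ v) ->
  \sum_(v in S | T == S :\ v) f v = 0.
Proof. by move=> H; rewrite big1 // => v /andP[/H /negbTE ->]. Qed.

Lemma sign_neq0 k : (-1) ^+ k != 0 :> F.
Proof. by rewrite expf_eq0 oppr_eq0 oner_eq0 andbF. Qed.

Lemma rank_lb i (R : {set {set V}}) (mv : {set V} -> V) (g : {set V} -> nat) :
  (forall r, r \in R -> [/\ #|r| = i, kbasis E d r, mv r \in r & kbasis E d (r :\ mv r)]) ->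
  (forall r r' u, r \in R -> r' \in R -> r != r' -> u \in r' -> r' :\ u = r :\ mv r ->
     (g r < g r')%N) ->
  (#|R| <= \rank (kdiff E F i d))%N.
Proof.
move=> HR Hg.
set M := kdiff E F i d.
pose rho := fun a : 'I_#|R| => enum_rank (enum_val a).
apply: leq_trans (mxrankS (rowsub_sub rho M)).
rewrite row_leq_rank; apply/inj_row_free => x x0.
apply/rowP=> a0; rewrite mxE; apply/eqP/negPn/negP => xa0.
pose a := [arg max_(b > a0 | x 0 b != 0) g (enum_val b)].
have [ha hmax] : x 0 a != 0 /\ forall b, x 0 b != 0 -> (g (enum_val b) <= g (enum_val a))%N.
  by rewrite /a; case: arg_maxnP.
set r := enum_val a.
have rR : r \in R := enum_valP a.
have [rc rb rmv rmb] := HR r rR.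
have := congr1 (fun y : 'rV[F]_#|{set V}| => y 0 (enum_rank (r :\ mv r))) x0.
rewrite [in X in X = _ -> _]mxE [in X in _ = X -> _]mxE (bigD1 a) //= big1 ?addr0.
  rewrite mxE /rho kdiffE -/r rc eqxx rb rmb /= sum_single //.
  by move/eqP; rewrite mulf_eq0 (negbTE ha) (negbTE (sign_neq0 _)).
move=> b ba; rewrite mxE /rho kdiffE.
have [xb0|xb] := eqVneq (x 0 b) 0; first by rewrite xb0 mul0r.
case: ifP => _; last by rewrite mulr0.
rewrite sum_none ?mulr0 // => u ub; apply/negP => /eqP e.
have rbR : enum_val b \in R := enum_valP b.
have nrb : r != enum_val b.
  by apply: contra ba => /eqP/enum_val_inj ->.
have := Hg r (enum_val b) u rR rbR nrb ub (esym e).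
by rewrite ltnNge hmax.
Qed.


Lemma antisym_sum (I : finType) (P : pred (I * I)) (h : I * I -> F) :
  (forall p, P p -> p.1 != p.2) -> (forall p, P (p.2, p.1) = P p) ->
  (forall p, P p -> h (p.2, p.1) = - h p) -> \sum_(p | P p) h p = 0.
Proof.
move=> Hne Hs Hh.
rewrite (bigID (fun p : I * I => (enum_rank p.1 < enum_rank p.2)%N)) /=.
pose sw := fun p : I * I => (p.2, p.1).
have swK : involutive sw by case.
rewrite [X in _ + X](reindex_inj (inv_inj swK)) /=.
rewrite [X in _ + X](eq_bigl (fun p => P p && (enum_rank p.1 < enum_rank p.2)%N)); last first.
  move=> [u v] /=; rewrite Hs; case Pp: (P (u, v)) => //=.
  have := Hne _ Pp; rewrite /= => uv.
  rewrite -leqNgt leq_eqVlt.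
  have -> : (enum_rank u == enum_rank v :> nat) = false.
    by apply/negbTE; apply: contra uv => /eqP/val_inj/enum_rank_inj ->.
  by [].
under [X in _ + X]eq_bigr => p /andP[Pp _] do rewrite /sw Hh //.
by rewrite sumrN addrN.
Qed.

Lemma sg_lt (S : {set V}) v w : (enum_rank v < enum_rank w)%N -> v \in S ->
  sg S w = (sg (S :\ v) w).+1.
Proof.
move=> vw vS; rewrite /sg (cardsD1 v) inE vS vw /=; congr (_.+1); apply: eq_card => u.
by rewrite !inE andbA.
Qed.

Lemma sg_gt (S : {set V}) v w : (enum_rank v < enum_rank w)%N ->
  sg (S :\ w) v = sg S v.
Proof.
move=> vw; rewrite /sg; apply: eq_card => u; rewrite !inE.
case: eqP => [->|_] //=; by rewrite ltnNge ltnW // andbF.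
Qed.

Lemma sign_swap (S : {set V}) v w : v \in S -> w \in S -> v != w ->
  (-1) ^+ sg S w * (-1) ^+ sg (S :\ w) v =
  - ((-1) ^+ sg S v * (-1) ^+ sg (S :\ v) w) :> F.
Proof.
move=> vS wS vw.
have [lt|gt] := ltnP (enum_rank v) (enum_rank w).
  by rewrite (sg_lt lt vS) (sg_gt S lt) exprS mulN1r mulNr mulrC.
have lt : (enum_rank w < enum_rank v)%N.
  rewrite ltn_neqAle gt andbT; apply: contra vw => /eqP/val_inj/enum_rank_inj ->.
  by [].
by rewrite (sg_lt lt wS) (sg_gt S lt) exprS mulN1r mulNr opprK mulrC.
Qed.

Lemma standard_mono (d1 d2 : V -> nat) : (forall u, (0 < d2 u)%N -> (0 < d1 u)%N) ->
  standard E d1 -> standard E d2.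
Proof.
move=> H /forallP s1; apply/forallP => u; apply/forallP => v.
apply: contra (forallP (s1 u) v) => /and3P[e pu pv].
by rewrite e (H _ pu) (H _ pv).
Qed.

Lemma kbasis_mid (S : {set V}) v w : kbasis E d S -> w \in S :\ v ->
  kbasis E d (S :\ v :\ w) -> kbasis E d (S :\ v).
Proof.
move=> /andP[sub _] _ /andP[_ st]; apply/andP; split.
  by apply: subset_trans sub; apply: subsetDl.
apply: standard_mono st => u; rewrite !inE.
by case: (u == w); case: (u == v); case: (u \in S) => //=; rewrite ?subn0 ?subn1 //;
  move=> h; apply: leq_trans h (leq_pred _).
Qed.

Lemma kdiff_sq i : kdiff E F i.+1 d *m kdiff E F i d = 0.
Proof.
apply/matrixP => p q; rewrite !mxE.
rewrite -(enum_valK p) -(enum_valK q).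
set S := enum_val p; set T2 := enum_val q.
rewrite (reindex (@enum_rank _)) /=; last first.
  by apply: onW_bij; apply: enum_rank_bij.
case hS: ((#|S| == i.+1) && kbasis E d S); last first.
  rewrite big1 // => T _; rewrite kdiffE.
  by move: hS; case: (#|S| == _); case: (kbasis E d S) => //= _; rewrite mul0r.
case hT2: (kbasis E d T2); last first.
  rewrite big1 // => T _; rewrite [kdiff _ _ _ _ _ (enum_rank T2)]kdiffE hT2.
  by rewrite !andbF mulr0.
move/andP: hS => [/eqP cS bS].
rewrite (eq_bigr (fun T => (\sum_(v in S | T == S :\ v) (-1) ^+ sg S v) *
   (\sum_(w in T | T2 == T :\ w) (-1) ^+ sg T w))); last first.
  move=> T _; rewrite !kdiffE cS eqxx bS hT2 !andbT /=.
  case: (boolP [exists v in S, T == S :\ v]) => [/existsP[v /andP[vS /eqP eT]]|].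
    case: (boolP [exists w in T, T2 == T :\ w]) => [/existsP[w /andP[wT /eqP eT2]]|].
      have bT : kbasis E d T by rewrite eT; apply: (kbasis_mid bS (w := w)); rewrite -eT // -eT2.
      have cT : #|S :\ v| = i by move: cS; rewrite (cardsD1 v S) vS => -[].
      by rewrite bT eT cT eqxx.
    move=> /existsPn nw.
    have -> : \sum_(w in T | T2 == T :\ w) (-1) ^+ sg T w = 0 :> F.
      by apply: sum_none => w wT; move: (nw w); rewrite wT.
    by rewrite !if_same !mulr0.
  move=> /existsPn nv.
  have -> : \sum_(v in S | T == S :\ v) (-1) ^+ sg S v = 0 :> F.
    by apply: sum_none => v vS; move: (nv v); rewrite vS.
  by rewrite !if_same !mul0r.
under eq_bigr do rewrite big_distrl /=.
rewrite (exchange_big_dep (fun v => v \in S)) /=; last by move=> T v _ /andP[].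
rewrite (eq_bigr (fun v => (-1) ^+ sg S v *
   \sum_(w in S :\ v | T2 == S :\ v :\ w) (-1) ^+ sg (S :\ v) w)); last first.
  move=> v vS; rewrite -big_distrr /=.
  rewrite (eq_bigl (fun T => T == S :\ v)); last by move=> T; rewrite vS.
  by rewrite big_pred1_eq big_distrr.
under eq_bigr do rewrite big_distrr /=.
rewrite pair_big_dep /=.
apply: antisym_sum.
- move=> [v w] /= /andP[_ /andP[]]; rewrite in_setD1 => /andP[wv _] _.
  by rewrite eq_sym.
- move=> [v w] /=; rewrite !in_setD1 [in RHS]andbA [in LHS]andbA.
  rewrite !setDDl [[set v] :|: _]setUC eq_sym.
  by case: (v \in S); case: (w \in S); case: (w != v).
- move=> [v w] /= /andP[vS /andP[]]; rewrite in_setD1 => /andP[wv wS] _.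
  by apply: sign_swap; rewrite // eq_sym.
Qed.


Lemma kdiff0 : kdiff E F 0 d = 0.
Proof.
apply/matrixP=> p q; rewrite [RHS]mxE -(enum_valK p) -(enum_valK q) kdiffE.
case: ifP => // /and3P[/eqP/cards0_eq -> _ _].
by rewrite sum_none // => v; rewrite inE.
Qed.

Lemma eq_rank_val (p : 'I_#|{set V}|) (X : {set V}) : (p == enum_rank X) = (enum_val p == X).
Proof. by apply/eqP/eqP => [->|<-]; rewrite ?enum_rankK ?enum_valK. Qed.

Lemma rank_sum i :
  (\rank (kdiff E F i.+1 d) + \rank (kdiff E F i d) <= kcard E i d)%N.
Proof.
set Bi := [set S : {set V} | (#|S| == i) && kbasis E d S].
pose Q : 'M[F]_(#|Bi|, #|{set V}|) := \matrix_(a, p) (p == enum_rank (enum_val a))%:R.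
pose P := Q^T *m Q.
have PE : forall p q, P p q = ((p == q) && (enum_val p \in Bi))%:R.
  move=> p q; rewrite !mxE.
  rewrite (eq_bigr (fun a => ((enum_val p == enum_val a) && (enum_val q == enum_val a))%:R));
    last by move=> a _; rewrite !mxE !eq_rank_val -natrM mulnb.
  rewrite -(big_enum_val (fun X => ((enum_val p == X) && (enum_val q == X))%:R)) /=.
  case: (boolP (enum_val p \in Bi)) => h.
    rewrite (bigD1 (enum_val p)) //= eqxx /= big1 ?addr0 => [|X /andP[_ ne]].
      by rewrite andbT (inj_eq enum_val_inj) eq_sym.
    by rewrite eq_sym (negbTE ne).
  rewrite andbF big1 // => X XB; case: eqP => //= e; by rewrite e XB in h.
have M1P : kdiff E F i.+1 d *m P = kdiff E F i.+1 d.
  apply/matrixP=> p q; rewrite mxE (bigD1 q) //= PE eqxx /= big1 ?addr0; last first.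
    by move=> t tq; rewrite PE (negbTE tq) mulr0.
  case: (boolP (enum_val q \in Bi)) => h; first by rewrite mulr1.
  rewrite mulr0 -(enum_valK p) -(enum_valK q) kdiffE.
  case: ifP => // /and3P[/eqP cS bS bT].
  rewrite sum_none // => v vS; apply: contra h => /eqP e.
  rewrite inE bT andbT e; move: cS; rewrite (cardsD1 v (enum_val p)) vS add1n => -[->].
  by [].
have PM0 : P *m kdiff E F i d = kdiff E F i d.
  apply/matrixP=> p q; rewrite mxE (bigD1 p) //= PE eqxx /= big1 ?addr0; last first.
    by move=> t tp; rewrite PE eq_sym (negbTE tp) mul0r.
  case: (boolP (enum_val p \in Bi)) => h; first by rewrite mul1r.
  rewrite mul0r -(enum_valK p) -(enum_valK q) kdiffE.
  case: ifP => // /and3P[cS bS bT].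
  by rewrite inE cS bS in h.
have := mxrank_Frobenius (kdiff E F i.+1 d) P (kdiff E F i d).
rewrite M1P PM0 kdiff_sq mxrank0 addn0 => H.
apply: leq_trans H _.
apply: leq_trans (mxrankM_maxl _ _) _.
exact: rank_leq_col.
Qed.


Theorem morse (R : {set {set V}}) (mv : {set V} -> V) (g : {set V} -> nat) (c0 : nat) :
  (forall r, r \in R -> [/\ kbasis E d r, mv r \in r, kbasis E d (r :\ mv r)
                            & (r :\ mv r) \notin R]) ->
  (forall r r' u, r \in R -> r' \in R -> r != r' -> u \in r' -> r' :\ u = r :\ mv r ->
     (g r < g r')%N) ->
  (forall S, kbasis E d S -> S \notin R -> S \notin [set r :\ mv r | r in R] -> #|S| = c0) ->
  forall i, tor_dim E F i d =
    #|[set S : {set V} | [&& #|S| == i, kbasis E d S, S \notin R & S \notin [set r :\ mv r | r in R]]]|.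
Proof.
move=> HR Hg Hc.
set C := [set r :\ mv r | r in R].
pose Ri j := [set r in R | #|r| == j].
pose cr j := #|[set S : {set V} | [&& #|S| == j, kbasis E d S, S \notin R & S \notin C]]|.
have finj : {in R &, injective (fun r => r :\ mv r)}.
  move=> r r' rR r'R /= e; apply/eqP; apply/negPn/negP => ne.
  have [_ m' _ _] := HR r' r'R; have [_ m _ _] := HR r rR.
  have h1 := Hg r r' (mv r') rR r'R ne m' (esym e).
  have h2 := Hg r' r (mv r) r'R rR (ltac:(by rewrite eq_sym) : r' != r) m e.
  by have := ltn_trans h1 h2; rewrite ltnn.
have lb : forall j, (#|Ri j| <= \rank (kdiff E F j d))%N.
  move=> j; apply: (rank_lb (mv := mv) (g := g)).
    move=> r; rewrite inE => /andP[rR /eqP cr']; have [? ? ? _] := HR r rR; by split.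
  move=> r r' u; rewrite !inE => /andP[rR _] /andP[r'R _]; exact: Hg.
have crE : forall j, cr j != 0%N -> j = c0.
  move=> j; rewrite -lt0n card_gt0 => /set0Pn[S]; rewrite inE => /and4P[/eqP <- bS nR nC].
  by rewrite (Hc S bS nR nC).
have cnt : forall j, kcard E j d = (#|Ri j| + #|Ri j.+1| + cr j)%N.
  move=> j; rewrite /kcard; set Bj := [set S : {set V} | _].
  rewrite -(cardsID R Bj) -(cardsID C (Bj :\: R)) addnA.
  congr (_ + _ + _)%N.
  - apply: eq_card => S; rewrite !inE.
    case SR: (S \in R); rewrite ?andbF ?andbT //.
    by have [-> _ _ _] := HR S SR; rewrite andbT.
  - have finj' : {in Ri j.+1 &, injective (fun r => r :\ mv r)}.
      by move=> r r'; rewrite !inE => /andP[rR _] /andP[r'R _]; apply: finj.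
    rewrite -(card_in_imset finj').
    apply: eq_card => S; apply/idP/idP.
      rewrite !inE => /andP[/and3P[_ cS _] /imsetP[r rR eS]]; subst S.
      apply/imsetP; exists r => //; rewrite inE rR /=.
      have [_ m _ _] := HR r rR.
      by rewrite (cardsD1 (mv r) r) m add1n eqSS.

    move=> H; case: (imsetP H) => r; rewrite inE => /andP[rR cr'] ->.
    have [_ m b nR] := HR r rR.
    rewrite !inE nR b andbT /=; apply/andP; split; last by apply/imsetP; exists r.
    by move: cr'; rewrite (cardsD1 (mv r) r) m add1n eqSS.
  - apply: eq_card => S; rewrite !inE.
    by case: (S \in C); case: (S \in R); rewrite ?andbF ?andbT.
have ub : forall j, (\rank (kdiff E F j d) <= #|Ri j|)%N.
  case=> [|k]; first by rewrite kdiff0 mxrank0.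
  have [ck|ck] := eqVneq (cr k) 0%N.
    have := rank_sum k; rewrite cnt ck addn0 => H.
    have := lb k; move: H; set a := \rank _; set b := \rank _; set x := #|_|; set y := #|_|.
    move=> H1 H2; lia.
  have ck1 : cr k.+1 = 0%N.
    apply/eqP; apply: contraT => h; have := crE _ h; rewrite -(crE _ ck) => /eqP.
    by rewrite -[X in X == _]addn1 -[X in _ == X]addn0 eqn_add2l.
  have := rank_sum k.+1; rewrite cnt ck1 addn0 => H.
  have := lb k.+2; move: H; set a := \rank _; set b := \rank _; set x := #|_|; set y := #|_|.
  move=> H1 H2; lia.
move=> i; rewrite /tor_dim cnt.
have -> : \rank (kdiff E F i d) = #|Ri i| by apply/eqP; rewrite eqn_leq ub lb.
have -> : \rank (kdiff E F i.+1 d) = #|Ri i.+1| by apply/eqP; rewrite eqn_leq ub lb.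
rewrite /cr; lia.
Qed.


Corollary morse_one (R : {set {set V}}) (mv : {set V} -> V) (g : {set V} -> nat) S0 :
  (forall r, r \in R -> [/\ kbasis E d r, mv r \in r, kbasis E d (r :\ mv r)
                            & (r :\ mv r) \notin R]) ->
  (forall r r' u, r \in R -> r' \in R -> r != r' -> u \in r' -> r' :\ u = r :\ mv r ->
     (g r < g r')%N) ->
  (forall S, [&& kbasis E d S, S \notin R & S \notin [set r :\ mv r | r in R]] = (S == S0)) ->
  forall i, tor_dim E F i d = (#|S0| == i).
Proof.
move=> HR Hg Hc i; rewrite (@morse R mv g #|S0|) //; last first.
  by move=> S b nR nC; have := Hc S; rewrite b nR nC => /esym/eqP ->.
rewrite (eq_card (B := [pred S | (S == S0) && (#|S| == i)])); last first.
  by move=> S; rewrite !inE -Hc andbC.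
case: (eqVneq #|S0| i) => [e|ne].
  rewrite (eq_card (B := pred1 S0)) ?card1 // => S; rewrite !inE.
  by case: (eqVneq S S0) => [->|]; rewrite ?e ?eqxx.
apply: eq_card0 => S; rewrite !inE; case: (eqVneq S S0) => [->|] //=.
by rewrite (negbTE ne).
Qed.

Corollary morse_none (R : {set {set V}}) (mv : {set V} -> V) (g : {set V} -> nat) :
  (forall r, r \in R -> [/\ kbasis E d r, mv r \in r, kbasis E d (r :\ mv r)
                            & (r :\ mv r) \notin R]) ->
  (forall r r' u, r \in R -> r' \in R -> r != r' -> u \in r' -> r' :\ u = r :\ mv r ->
     (g r < g r')%N) ->
  (forall S, kbasis E d S -> S \notin R -> S \in [set r :\ mv r | r in R]) ->
  forall i, tor_dim E F i d = 0%N.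
Proof.
move=> HR Hg Hc i; rewrite (@morse R mv g 0) //; last first.
  by move=> S b nR; rewrite (Hc S b nR).
apply: eq_card0 => S; rewrite !inE; apply/negP => /and4P[_ b nR].
by rewrite (Hc S b nR).
Qed.

Lemma standard_pos (d1 d2 : V -> nat) v : standard E d1 ->
  (forall u, u != v -> (0 < d2 u)%N -> (0 < d1 u)%N) ->
  (0 < d1 v)%N \/ (forall w, (E v w || E w v) -> d2 w = 0%N) -> standard E d2.
Proof.
move=> s1 H [pv|iso].
  apply: standard_mono s1 => u; case: (eqVneq u v) => [->|uv] //; exact: H.
apply/forallP => u; apply/forallP => w; apply/negP => /and3P[e pu pw].
case: (eqVneq u v) => [eu|uv].
  by move: pw; rewrite iso // -eu e.
case: (eqVneq w v) => [ew|wv].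
  by move: pu; rewrite iso // -ew e orbT.
by move/forallP: s1 => /(_ u)/forallP/(_ w); rewrite e (H _ uv pu) (H _ wv pw).
Qed.

Lemma cone v : (0 < d v)%N ->
  (1 < d v)%N \/ (forall u, (E v u || E u v) -> d u = 0%N) -> forall i, tor_dim E F i d = 0%N.
Proof.
move=> dv hv.
have del : forall r, kbasis E d r -> v \in r -> kbasis E d (r :\ v).
  move=> r /andP[sub st] vr; apply/andP; split.
    by apply: subset_trans sub; apply: subsetDl.
  apply: (standard_pos (v := v) st).
    by move=> u uv; rewrite in_setD1 (negbTE uv).
  case: hv => [h|h]; [left|right].
    by rewrite vr subn_gt0.
  by move=> w /h ->.
have add : forall S, kbasis E d S -> v \notin S -> kbasis E d (v |: S).
  move=> S /andP[sub st] vS; apply/andP; split.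
    by rewrite subUset sub1set inE dv.
  apply: standard_mono st => u; rewrite in_setU1.
  by case: (u == v); case: (u \in S); rewrite //= ?subn0 ?subn1 // => h; apply: leq_trans h (leq_pred _).
apply: (@morse_none [set S | kbasis E d S && (v \in S)] (fun _ => v) (fun _ => 0%N)).
- move=> r; rewrite inE => /andP[b vr]; split => //; first exact: del.
  by rewrite inE !in_setD1 eqxx andbF.
- move=> r r' u; rewrite !inE => /andP[_ vr] /andP[_ vr'] ne ur' e; exfalso.
  case: (eqVneq u v) => [uv|uv].
    rewrite uv in e; have : r = r' by rewrite -(setD1K vr) -(setD1K vr') e.
    by move/eqP; rewrite (negbTE ne).
  have : v \in r' :\ u by rewrite in_setD1 eq_sym uv vr'.
  by rewrite e in_setD1 eqxx.
- move=> S b; rewrite inE b /= => vS; apply/imsetP; exists (v |: S).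
    by rewrite inE add //= setU11.
  by rewrite setU1K.
Qed.


Lemma single_rank (r r' : {set V}) v u : v \in r -> v \in r' -> u \in r' ->
  r' :\ u = r :\ v -> r = r'.
Proof.
move=> vr vr' ur' e; case: (eqVneq u v) => [uv|uv].
  by rewrite -(setD1K vr) -(setD1K vr') -e uv.
have : v \in r' :\ u by rewrite in_setD1 eq_sym uv vr'.
by rewrite e in_setD1 eqxx.
Qed.

End Gen.

Section Tree.
Variables (F : fieldType) (n : nat) (a : 'I_n -> nat).
Local Notation T := (tvtx a).
Local Notation E := (tree_edge a).
Definition ysig := {i : 'I_n & 'I_(a i)}.
Definition zz : T := None.
Definition xv (i : 'I_n) : T := Some (inl i).
Definition yv (p : ysig) : T := Some (inr p).
Definition ind (U : {set T}) : T -> nat := fun v => (v \in U : nat).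
Definition indep (A : {set T}) := [forall u, forall w, ~~ [&& E u w, u \in A & w \in A]].

Lemma kbasis_ind (U S : {set T}) : kbasis E (ind U) S = (S \subset U) && indep (U :\: S).
Proof.
rewrite /kbasis; congr (_ && _).
  by rewrite (_ : [set v | _] = U) //; apply/setP => v; rewrite !inE /ind; case: (v \in U).
rewrite /standard /indep; apply: eq_forallb => u; apply: eq_forallb => w.
by rewrite !in_setD /ind; case: (u \in U); case: (u \in S); case: (w \in U); case: (w \in S);
  rewrite ?andbF.
Qed.

Lemma E_sym u w : E u w = E w u.
Proof. by case: u => [[i|p]|]; case: w => [[j|q]|]. Qed.

Lemma E_irr u : E u u = false.
Proof. by case: u => [[i|p]|]. Qed.

Lemma E_zx i : E zz (xv i). Proof. by []. Qed.
Lemma E_xy p : E (xv (tag p)) (yv p). Proof. by rewrite /= eqxx. Qed.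

Lemma indepP (A : {set T}) : indep A =
  [forall i, ~~ ((zz \in A) && (xv i \in A))] &&
  [forall p, ~~ ((xv (tag p) \in A) && (yv p \in A))].
Proof.
apply/idP/idP.
  move/forallP => H; apply/andP; split.
    apply/forallP => i; have := forallP (H zz) (xv i); by rewrite E_zx.
  apply/forallP => p; have := forallP (H (xv (tag p))) (yv p); by rewrite E_xy.
move=> /andP[/forallP H1 /forallP H2]; apply/forallP => u; apply/forallP => w.
apply/negP => /and3P[].
case: u => [[i|p]|]; case: w => [[j|q]|] //=.
- move=> /eqP <- xA yA; by have := H2 q; rewrite /xv /yv xA yA.
- move=> _ xA zA; by have := H1 i; rewrite /xv /zz xA zA.
- move=> /eqP <- yA xA; by have := H2 p; rewrite /xv /yv xA yA.
- move=> _ zA xA; by have := H1 j; rewrite /xv /zz xA zA.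
Qed.

Lemma indep_sub (A B : {set T}) : A \subset B -> indep B -> indep A.
Proof.
move=> /subsetP sAB /forallP H; apply/forallP => u; apply/forallP => w.
apply: contra (forallP (H u) w) => /and3P[e uA wA].
by rewrite e (sAB _ uA) (sAB _ wA).
Qed.

Lemma indep_add (v : T) (A : {set T}) : indep A -> (forall w, E v w -> w \notin A) -> indep (v |: A).
Proof.
move=> /forallP H Hv; apply/forallP => u; apply/forallP => w.
apply/negP => /and3P[e]; rewrite !in_setU1; move: e.
case: (eqVneq u v) => [->|uv] /=.
  case: (eqVneq w v) => [->|wv] /=; first by rewrite E_irr.
  by move=> e _ wA; move: (Hv w e); rewrite wA.
case: (eqVneq w v) => [->|wv] /=.
  by move=> e uA _; rewrite E_sym in e; move: (Hv u e); rewrite uA.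
by move=> e uA wA; move: (forallP (H u) w); rewrite e uA wA.
Qed.

Lemma basis_sub (U S : {set T}) : kbasis E (ind U) S -> S \subset U.
Proof. by rewrite kbasis_ind => /andP[]. Qed.

Lemma basis_grow (U S S' : {set T}) : kbasis E (ind U) S -> S \subset S' -> S' \subset U ->
  kbasis E (ind U) S'.
Proof.
rewrite !kbasis_ind => /andP[_ iS] sS sU; rewrite sU /=.
by apply: indep_sub iS; apply: setDS.
Qed.

Lemma basis_del (U S : {set T}) (v : T) : kbasis E (ind U) S -> v \in S ->
  (forall w, E v w -> w \in U -> w \in S) -> kbasis E (ind U) (S :\ v).
Proof.
rewrite !kbasis_ind => /andP[sU iS] vS Hv; apply/andP; split.
  by apply: subset_trans sU; apply: subsetDl.
have -> : U :\: (S :\ v) = v |: (U :\: S).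
  apply/setP => w; rewrite !inE; case: (eqVneq w v) => [->|] //=.
  by rewrite (subsetP sU _ vS).
have := @indep_add v (U :\: S) iS. apply => w e; rewrite inE negb_and negbK.
by case wU: (w \in U); rewrite ?orbT // (Hv w e wU).
Qed.


Lemma xv_inj : injective xv. Proof. by move=> i j [->]. Qed.
Lemma yv_inj : injective yv. Proof. by move=> p q [->]. Qed.
Lemma zx i : (zz == xv i) = false. Proof. by []. Qed.
Lemma zy p : (zz == yv p) = false. Proof. by []. Qed.
Lemma xy i p : (xv i == yv p) = false. Proof. by []. Qed.

Lemma E_z w : E zz w -> exists i, w = xv i.
Proof. by case: w => [[i|p]|] //= _; exists i. Qed.
Lemma E_x i w : E (xv i) w -> w = zz \/ exists2 p, w = yv p & tag p = i.
Proof. by case: w => [[j|p]|] //= h; [right; exists p => //; apply/eqP | left]. Qed.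
Lemma E_y p w : E (yv p) w -> w = xv (tag p).
Proof. by case: w => [[j|q]|] //= /eqP <-. Qed.

Lemma caseC (U : {set T}) m : zz \in U -> xv m \in U -> (forall p, yv p \notin U) ->
  forall i, tor_dim E F i (ind U) = (#|U :\ zz| == i).
Proof.
move=> zU xU nY.
apply: (@morse_one _ _ _ _ [set S | [&& kbasis E (ind U) S, xv m \in S & zz \in S]]
          (fun _ => xv m) (fun _ => 0%N)).
- move=> r; rewrite inE => /and3P[b xr zr]; split => //.
    apply: basis_del b xr _ => w /E_x [->|[p -> _]] //.
    by move=> yU; move: (nY p); rewrite yU.
  by rewrite inE !in_setD1 eqxx /= andbF.
- move=> r r' u; rewrite !inE => /and3P[_ xr _] /and3P[_ xr' _] ne ur' e.
  by move: ne; rewrite (single_rank xr xr' ur' e) eqxx.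
move=> S; apply/idP/idP.
  move=> /and3P[b nR nC]; rewrite inE in nR.
  have sU := basis_sub b.
  have hb := b; rewrite kbasis_ind in hb; move: hb => /andP[_].
  rewrite indepP => /andP[/forallP Hz _].
  have xS : xv m \in S.
    apply: contraT => xS.
    have zS : zz \in S.
      apply: contraT => zS; have := Hz m; by rewrite !inE zS xS zU xU.
    move: nC; rewrite (_ : S = (xv m |: S) :\ xv m); last by rewrite setU1K.
    move=> /negP; case; apply/imsetP; exists (xv m |: S) => //.
    rewrite inE setU11 in_setU1 zS orbT !andbT.
    apply: basis_grow b _ _; first exact: subsetUr.
    by rewrite subUset sub1set xU sU.
  have zS : zz \notin S by move: nR; rewrite b xS.
  apply/eqP/setP => v; rewrite in_setD1.
  case: v => [[j|p]|].
  - case xjU: (Some (inl j) \in U); rewrite /=; last first.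
      by apply/negbTE; apply: contraFN xjU => h; apply: (subsetP sU).
    apply: contraT => xjS; have := Hz j; by rewrite !inE zS zU /xv xjU xjS.
  - move: (nY p) => /negbTE nYp; rewrite /= nYp /=; apply/negbTE.
    by apply: contraFN nYp => h; apply: (subsetP sU).
  - by rewrite /= (negbTE zS).
move=> /eqP ->; apply/and3P; split.
- rewrite kbasis_ind subD1set /= indepP.
  rewrite (_ : U :\: (U :\ zz) = [set zz]); last first.
    apply/setP => v; rewrite !inE; case: (eqVneq v zz) => [->|vz] /=; rewrite ?zU //.
    by case: (v \in U).
  apply/andP; split; apply/forallP => ? ; by rewrite !inE.
- by rewrite !inE eqxx /= !andbF.
- apply/negP => /imsetP[r _ e].
  have : xv m \in U :\ zz by rewrite in_setD1 xU.
  by rewrite e in_setD1 eqxx.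
Qed.


Lemma caseD (U : {set T}) j p : zz \in U -> xv j \in U ->
  (forall q, tag q = j -> yv q \notin U) -> yv p \in U -> xv (tag p) \in U ->
  forall i, tor_dim E F i (ind U) = 0%N.
Proof.
move=> zU xU nY yU xpU.
pose R := [set S | kbasis E (ind U) S &&
   (((zz \in S) && (xv j \in S)) || ((zz \notin S) && (yv p \in S)))].
pose mv := fun S : {set T} => if zz \in S then xv j else yv p.
have Rmv : forall r, r \in R -> mv r \in r.
  move=> r; rewrite inE /mv => /andP[_]; case: (zz \in r) => /=; by rewrite ?andbT ?orbF.
apply: (@morse_none _ _ _ _ R mv (fun S => (zz \in S : nat))).
- move=> r rR; have mr := Rmv r rR; move: rR; rewrite inE /mv => /andP[b].
  case zr: (zz \in r) => /= h; move: mr; rewrite /mv zr => mr; split => //.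
  + apply: basis_del b mr _ => w /E_x [->|[q -> tq]] //.
    by move=> yqU; move: (nY q tq); rewrite yqU.
  + by rewrite !inE !eqxx zr /= andbF.
  + apply: (basis_del b mr) => w /E_y -> _.
    apply: contraT => xr.
    have := b; rewrite kbasis_ind => /andP[_]; rewrite indepP => /andP[/forallP Hz _].
    by have := Hz (tag p); rewrite !inE zr zU xr xpU.
  + by rewrite !inE !eqxx zr /= andbF.
- move=> r r' u rR r'R ne ur' e.
  have mr := Rmv r rR; have mr' := Rmv r' r'R.
  move: e; rewrite /mv; case zr: (zz \in r) => e.
    have zr' : zz \in r'.
      have : zz \in r :\ xv j by rewrite in_setD1 zr.
      by rewrite -e in_setD1 => /andP[].
    move: mr'; rewrite /mv zr' => mr'.
    have : xv j \in r by move: mr; rewrite /mv zr.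
    by move=> mr0; move: ne; rewrite (single_rank mr0 mr' ur' e) eqxx.
  case zr': (zz \in r') => //.
  move: mr mr'; rewrite /mv zr zr' => mr mr'.
  by move: ne; rewrite (single_rank mr mr' ur' e) eqxx.
- move=> S b nR; have sU := basis_sub b.
  move: nR; rewrite inE b /=.
  case zS: (zz \in S) => /= h.
    apply/imsetP; exists (xv j |: S).
      rewrite inE in_setU1 zS orbT setU11 /= andbT.
      apply: basis_grow b _ _; first exact: subsetUr.
      by rewrite subUset sub1set xU sU.
    by rewrite /mv in_setU1 zS orbT /= setU1K //; rewrite orbF in h.
  apply/imsetP; exists (yv p |: S).
    rewrite inE in_setU1 zS setU11 /= andbT.
    apply: basis_grow b _ _; first exact: subsetUr.
    by rewrite subUset sub1set yU sU.
  by rewrite /mv in_setU1 zS /= setU1K.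
Qed.


Definition isx (v : T) := if v is Some (inl _) then true else false.

Lemma caseAB (U : {set T}) :
  (forall p, yv p \in U -> xv (tag p) \in U) ->
  (forall i, xv i \in U -> exists p, tag p = i /\ yv p \in U) ->
  (zz \in U -> exists i, xv i \in U) ->
  forall k, tor_dim E F k (ind U) = (#|[set v in U | ~~ isx v]| == k).
Proof.
move=> hy hx hz.
pose ystar i := if [pick p | (tag p == i) && (yv p \in U)] is Some p then yv p else zz.
have ystarP : forall i, xv i \in U -> exists p, [/\ ystar i = yv p, tag p = i & yv p \in U].
  move=> i xU; rewrite /ystar; case: pickP => [p /andP[/eqP tp yU]|none].
    by exists p.
  by have [p [tp yU]] := hx i xU; move: (none p); rewrite tp eqxx yU.
pose minx (S : {set T}) (i : 'I_n) := (xv i \in S) && [forall j : 'I_n, (j < i)%N ==> (xv j \notin S)].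
have minx_uniq : forall S i i', minx S i -> minx S i' -> i = i'.
  move=> S i i' /andP[xi /forallP hi] /andP[xi' /forallP hi'].
  case: (ltngtP i i') => [lt|gt|/val_inj //].
    by move: (hi' i); rewrite lt xi.
  by move: (hi i'); rewrite gt xi'.
have minx_ex : forall (S : {set T}) i, xv i \in S -> exists i', minx S i'.
  move=> S i xi.
  case: (@arg_minnP _ i (fun j => xv j \in S) (fun j : 'I_n => nat_of_ord j) xi) => j xj hj.
  exists j; rewrite /minx xj /=; apply/forallP => j'; apply/implyP => lt.
  by apply: contraL lt => /hj; rewrite ltnNge => ->.
pose lvl (S : {set T}) := [pick i | minx S i].
have lvlE : forall (S : {set T}) i, minx S i -> lvl S = Some i.
  move=> S i mi; rewrite /lvl; case: pickP => [i' mi'|none]; last by move: (none i); rewrite mi.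
  by rewrite (minx_uniq _ _ _ mi' mi).
have lvlN : forall S : {set T}, (forall i, xv i \notin S) -> lvl S = None.
  move=> S h; rewrite /lvl; case: pickP => [i /andP[xi _]|//]; by move: (h i); rewrite xi.
have minxD : forall (S : {set T}) p i, minx (S :\ yv p) i = minx S i.
  move=> S p i; rewrite /minx in_setD1 /=; congr (_ && _).
  by apply: eq_forallb => j; rewrite in_setD1.
have minxU : forall (S : {set T}) p i, minx (yv p |: S) i = minx S i.
  move=> S p i; rewrite /minx in_setU1 /=; congr (_ && _).
  by apply: eq_forallb => j; rewrite in_setU1.
pose R := [set S | kbasis E (ind U) S && (if lvl S is Some i then ystar i \in S else false)].
pose mv := fun S => if lvl S is Some i then ystar i else zz.
pose g := fun S => if lvl S is Some i then (n - i)%N else 0%N.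
have Rlvl : forall r, r \in R -> exists i p,
   [/\ lvl r = Some i, minx r i, ystar i = yv p, tag p = i & yv p \in r].
  move=> r; rewrite inE => /andP[b]; case ls: (lvl r) => [i|//] yr.
  have mi : minx r i by move: ls; rewrite /lvl; case: pickP => // i' mi' [<-].
  have xU : xv i \in U by move: mi => /andP[xi _]; apply: (subsetP (basis_sub b)).
  have [p [yp tp _]] := ystarP i xU.
  by exists i, p; split => //; rewrite -yp.
have mvE : forall r i, lvl r = Some i -> mv r = ystar i by move=> r i ls; rewrite /mv ls.
apply: (@morse_one _ _ _ _ R mv g).
- move=> r rR; have [i [p [ls mi yp tp yr]]] := Rlvl r rR.
  move: (rR); rewrite inE => /andP[b _].
  rewrite (mvE _ _ ls) yp; split => //.
  + apply: (basis_del b yr) => w /E_y -> _; rewrite tp; by case/andP: mi.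
  + rewrite inE negb_and (lvlE _ i); last by rewrite minxD.
    by rewrite yp !inE eqxx orbT.
- move=> r r' u rR r'R ne ur' e.
  have [i [p [ls mi yp tp yr]]] := Rlvl r rR.
  have [i' [p' [ls' mi' yp' tp' yr']]] := Rlvl r' r'R.
  rewrite /g ls ls'.
  move: e; rewrite (mvE _ _ ls) yp => e.
  have xr' : xv i \in r'.
    have : xv i \in r :\ yv p by rewrite in_setD1 /=; case/andP: mi.
    by rewrite -e in_setD1 => /andP[].
  have le : (i' <= i)%N.
    rewrite leqNgt; apply/negP => lt; case/andP: mi' => _ /forallP/(_ i).
    by rewrite lt xr'.
  case: (ltngtP i' i) le => [lt|//|eq] _.
    have := ltn_ord i; lia.
  have ii : i' = i by apply: val_inj.
  have pp : yv p' = yv p by rewrite -yp' ii yp.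
  rewrite pp in yr'.
  by move: ne; rewrite (single_rank yr yr' ur' e) eqxx.
move=> S; apply/idP/idP.
  move=> /and3P[b nR nC]; have sU := basis_sub b.
  have hb := b; rewrite kbasis_ind indepP in hb.
  move: hb => /and3P[_ /forallP Hz /forallP Hyx].
  have nx : forall i, xv i \notin S.
    move=> i; apply/negP => xi; have [i' mi'] := minx_ex S i xi.
    have xU : xv i' \in U by move: mi' => /andP[xi' _]; apply: (subsetP sU).
    have [p [yp tp yU]] := ystarP i' xU.
    have ls := lvlE _ _ mi'.
    case yS: (yv p \in S).
      by move: nR; rewrite inE b ls yp yS.
    move: nC => /negP; apply; apply/imsetP; exists (yv p |: S).
      rewrite inE (lvlE _ i'); last by rewrite minxU.
      rewrite yp setU11 andbT; apply: basis_grow b _ _; first exact: subsetUr.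
      by rewrite subUset sub1set yU sU.
    rewrite /mv (lvlE _ i'); last by rewrite minxU.
    by rewrite yp setU1K // yS.
  apply/eqP/setP => v; rewrite inE.
  case: v => [[i|p]|] /=.
  - by rewrite andbF; apply/negbTE; apply: (nx i).
  - rewrite andbT; case yU: (Some (inr p) \in U).
      apply: contraT => yS; have xU := hy p yU.
      have := Hyx p; rewrite !inE /yv yU yS andbT /=.
      by rewrite (negbTE (nx _)) xU.
    by apply/negbTE; apply: contraFN yU => h; apply: (subsetP sU).
  - rewrite andbT; case zU: (None \in U).
      apply: contraT => zS; have [i xU] := hz zU.
      by have := Hz i; rewrite !inE /zz zU zS (negbTE (nx _)) xU.
    by apply/negbTE; apply: contraFN zU => h; apply: (subsetP sU).
move=> /eqP ->; apply/and3P; split.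
- rewrite kbasis_ind indepP; apply/and3P; split.
  + by apply/subsetP => v; rewrite inE => /andP[].
  + apply/forallP => i; rewrite !inE /=; by case: (zz \in U).
  + apply/forallP => p; rewrite !inE /=; by case: (yv p \in U); rewrite ?andbF.
- rewrite inE lvlN ?andbF // => i; by rewrite inE /= andbF.
- apply/negP => /imsetP[r rR e].
  have [i [p [ls mi yp tp yr]]] := Rlvl r rR.
  have : xv i \in r :\ mv r by rewrite (mvE _ _ ls) yp in_setD1 /=; case/andP: mi.
  by rewrite -e inE /= andbF.
Qed.


Definition noiso (U : {set T}) := [forall v, (v \in U) ==> [exists w, E v w && (w \in U)]].
Definition typeAB (U : {set T}) := noiso U &&
  [forall i, (xv i \in U) ==> [exists p, (tag p == i) && (yv p \in U)]].
Definition typeC (U : {set T}) := [&& noiso U, zz \in U & [forall p, yv p \notin U]].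

Lemma tor_U (U : {set T}) i : tor_dim E F i (ind U) =
  ((typeAB U && (#|[set v in U | ~~ isx v]| == i)) + (typeC U && (#|U :\ zz| == i)))%N.
Proof.
rewrite /typeAB /typeC.
case: (boolP (noiso U)) => ni /=; last first.
  move: ni => /forallPn[v]; rewrite negb_imply => /andP[vU /existsPn nw].
  apply: (@cone _ E F (ind U) v); first by rewrite /ind vU.
  right => u h; have e : E v u by case/orP: h => // h; rewrite E_sym.
  rewrite /ind.
  by move: (nw u); rewrite e /=; case: (u \in U).
have nbr : forall v, v \in U -> exists2 w, E v w & w \in U.
  by move=> v vU; move/forallP: ni => /(_ v); rewrite vU /= => /existsP[w /andP[]]; exists w.
have hy : forall p, yv p \in U -> xv (tag p) \in U.
  by move=> p /nbr[w /E_y ->].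
have hz : zz \in U -> exists k, xv k \in U.
  by move=> /nbr[w /E_z[k ->] wU]; exists k.
case: (boolP [forall i, _]) => hall /=.
  have -> : (zz \in U) && [forall p, yv p \notin U] = false.
    apply/negbTE/negP => /andP[/hz[k xU] /forallP ny].
    move/forallP: hall => /(_ k); rewrite xU /= => /existsP[p /andP[_ yU]].
    by move: (ny p); rewrite yU.
  rewrite addn0; apply: caseAB => // j xU.
  move/forallP: hall => /(_ j); rewrite xU /= => /existsP[p /andP[/eqP tp yU]].
  by exists p.
move: hall => /forallPn[j]; rewrite negb_imply => /andP[xU /existsPn ny].
have zU : zz \in U.
  have [w /E_x[-> //|[q -> tq]] wU] := nbr _ xU.
  by move: (ny q); rewrite tq eqxx wU.
rewrite zU /=.
case: (boolP [forall p, yv p \notin U]) => hny /=.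
  by rewrite (caseC zU xU) // => p; move/forallP: hny.
move: hny => /forallPn[p]; rewrite negbK => yU.
apply: (caseD zU xU _ yU (hy p yU)) => q tq.
by move: (ny q); rewrite tq eqxx /=.
Qed.


Definition mkA (P : {set ysig}) : {set T} := [set yv p | p in P] :|: [set xv (tag p) | p in P].

Lemma mkA_z P : (zz \in mkA P) = false.
Proof. by rewrite inE; apply/negbTE; rewrite negb_or; apply/andP; split; apply/negP => /imsetP[]. Qed.

Lemma mkA_x P i : (xv i \in mkA P) = [exists p in P, tag p == i].
Proof.
rewrite inE; apply/orP/existsP.
  case=> /imsetP[p pP e]; first by [].
  by case: e => ->; exists p; rewrite pP eqxx.
case=> p /andP[pP /eqP <-]; right; apply/imsetP; by exists p.
Qed.

Lemma mkA_y P q : (yv q \in mkA P) = (q \in P).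
Proof.
rewrite inE; apply/orP/idP.
  case=> /imsetP[p pP e]; last by [].
  by case: e => ->.
by move=> qP; left; apply/imsetP; exists q.
Qed.

Lemma sum_bool (I : finType) (P : pred I) : (\sum_(x : I) (P x : nat) = #|P|)%N.
Proof. by rewrite -sum1_card [RHS]big_mkcond /=; apply: eq_bigr => x _; rewrite unfold_in; case: (P x). Qed.

Lemma card_ysig : #|{: ysig}| = (\sum_(i < n) a i)%N.
Proof.
rewrite card_tagged sumnE big_map big_enum /=; apply: eq_bigr => i _.
by rewrite card_ord.
Qed.


Definition Yp (U : {set T}) : {set ysig} := [set p | yv p \in U].
Local Notation S0 U := [set v in U | ~~ isx v].

Lemma mkA_inj : injective mkA.
Proof. by move=> P Q e; apply/setP => p; rewrite -!mkA_y e. Qed.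

Lemma zmkA_inj : injective (fun P => zz |: mkA P).
Proof. by move=> P Q /= e; apply/setP => p; rewrite -!mkA_y; move/setP: e => /(_ (yv p)); rewrite !in_setU1. Qed.

Lemma S0_mkA P : S0 (mkA P) = yv @: P.
Proof.
apply/setP => v; rewrite inE; case: v => [[i|q]|] /=.
- by rewrite andbF; apply/esym/negbTE/negP => /imsetP[].
- rewrite andbT (mkA_y P q); apply/idP/imsetP => [qP|[p pP [->]]] //; by exists q.
- by rewrite (mkA_z P); apply/esym/negbTE/negP => /imsetP[].
Qed.

Lemma S0_zmkA P : S0 (zz |: mkA P) = zz |: yv @: P.
Proof.
apply/setP => v; rewrite in_setU1 -S0_mkA !inE.
by case: v => [[i|q]|] //=; rewrite ?andbF ?andbT.
Qed.

Lemma card_S0_mkA P : #|S0 (mkA P)| = #|P|.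
Proof. by rewrite S0_mkA card_imset //; apply: yv_inj. Qed.

Lemma card_S0_zmkA P : #|S0 (zz |: mkA P)| = #|P|.+1.
Proof.
rewrite S0_zmkA cardsU1 card_imset; last exact: yv_inj.
have -> : zz \notin yv @: P by apply/negP => /imsetP[].
by [].
Qed.

Lemma typeAB_core (U : {set T}) P : mkA P \subset U ->
  (forall v, v \in U -> v = zz \/ v \in mkA P) -> (zz \in U -> P != set0) -> typeAB U.
Proof.
move=> sub memU hb.
apply/andP; split.
  rewrite /noiso; apply/forallP => v; apply/implyP => vU; case: (memU v vU) => [ev|].
    rewrite ev in vU *; have /set0Pn[p pP] := hb vU.
    apply/existsP; exists (xv (tag p)); rewrite E_zx /=; apply: (subsetP sub).
    by rewrite mkA_x; apply/existsP; exists p; rewrite pP eqxx.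
  case: v {vU} => [[i|q]|] //.
  - rewrite -/(xv i) mkA_x => /existsP[p /andP[pP /eqP tp]].
    apply/existsP; exists (yv p); rewrite -tp E_xy /=; apply: (subsetP sub).
    by rewrite mkA_y.
  - rewrite -/(yv q) mkA_y => qP.
    apply/existsP; exists (xv (tag q)); rewrite E_sym E_xy /=; apply: (subsetP sub).
    by rewrite mkA_x; apply/existsP; exists q; rewrite qP eqxx.
  - by rewrite -/zz mkA_z.
apply/forallP => i; apply/implyP => /memU [//|].
rewrite mkA_x => /existsP[p /andP[pP tp]]; apply/existsP; exists p.
by rewrite tp (subsetP sub) // mkA_y.
Qed.

Lemma typeAB_mkA P : typeAB (mkA P).
Proof.
by apply: (typeAB_core (P := P)) => // [v vU|]; [right | rewrite mkA_z].
Qed.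

Lemma typeAB_zmkA P : P != set0 -> typeAB (zz |: mkA P).
Proof.
move=> hP; apply: (typeAB_core (P := P)) => //; first exact: subsetUr.
by move=> v; rewrite in_setU1 => /orP[/eqP|]; [left|right].
Qed.

Lemma typeAB_inv U : typeAB U ->
  [/\ U = (if zz \in U then zz |: mkA (Yp U) else mkA (Yp U)) & (zz \in U -> Yp U != set0)].
Proof.
move=> /andP[ni /forallP hall].
have nbr : forall v, v \in U -> exists2 w, E v w & w \in U.
  by move=> v vU; move/forallP: ni => /(_ v); rewrite vU /= => /existsP[w /andP[]]; exists w.
have hy : forall p, yv p \in U -> xv (tag p) \in U.
  by move=> p /nbr[w /E_y ->].
have eA : U :\ zz = mkA (Yp U).
  apply/setP => v; rewrite in_setD1; case: v => [[i|q]|] /=.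
  - rewrite -/(xv i) mkA_x; apply/idP/existsP.
      move=> xU; move: (hall i); rewrite xU /= => /existsP[p /andP[tp yU]].
      by exists p; rewrite inE yU tp.
    by case=> p /andP[]; rewrite inE => /hy xU /eqP <-.
  - by rewrite -/(yv q) mkA_y inE.
  - by rewrite -/zz mkA_z.
split.
  case zU: (zz \in U); last by rewrite -eA; apply/setP => v; rewrite in_setD1; case: eqP => // ->; rewrite zU.
  by rewrite -eA setD1K.
move=> zU; have [w /E_z[i ->] xU] := nbr _ zU.
move: (hall i); rewrite xU /= => /existsP[p /andP[_ yU]].
by apply/set0Pn; exists p; rewrite inE.
Qed.


Definition mkC (K : {set 'I_n}) : {set T} := zz |: [set xv i | i in K].

Lemma mkC_x K i : (xv i \in mkC K) = (i \in K).
Proof.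
rewrite in_setU1 /=; apply/imsetP/idP => [[j jK [->]]|iK] //; by exists i.
Qed.

Lemma mkC_y K p : (yv p \in mkC K) = false.
Proof. by rewrite in_setU1 /=; apply/negbTE/negP => /imsetP[]. Qed.

Lemma mkC_inj : injective mkC.
Proof. by move=> K L e; apply/setP => i; rewrite -!mkC_x e. Qed.

Lemma card_mkC K : #|mkC K :\ zz| = #|K|.
Proof.
rewrite /mkC setU1K; last by apply/negP => /imsetP[].
by rewrite card_imset //; apply: xv_inj.
Qed.

Lemma typeC_mkC K : K != set0 -> typeC (mkC K).
Proof.
move=> /set0Pn[i iK]; apply/and3P; split; last 2 first.
- by rewrite setU11.
- by apply/forallP => p; rewrite mkC_y.
apply/forallP => v; apply/implyP; case: v => [[j|q]|] //.
- rewrite -/(xv j) mkC_x => jK; apply/existsP; exists zz; rewrite E_sym E_zx /=.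
  by rewrite setU11.
- by rewrite -/(yv q) mkC_y.
- move=> _; apply/existsP; exists (xv i); rewrite -/zz E_zx /= mkC_x.
  done.
Qed.

Lemma typeC_inv U : typeC U -> U = mkC [set i | xv i \in U] /\ [set i | xv i \in U] != set0.
Proof.
move=> /and3P[ni zU /forallP ny].
have nbr : forall v, v \in U -> exists2 w, E v w & w \in U.
  by move=> v vU; move/forallP: ni => /(_ v); rewrite vU /= => /existsP[w /andP[]]; exists w.
split.
  apply/setP => v; case: v => [[i|q]|].
  - by rewrite -/(xv i) mkC_x inE.
  - by rewrite -/(yv q) mkC_y; apply/negbTE; apply: ny.
  - by rewrite -/zz setU11 zU.
have [w /E_z[i ->] xU] := nbr _ zU.
by apply/set0Pn; exists i; rewrite inE.
Qed.

Lemma cAB0 i : #|[pred U | typeAB U && (zz \notin U) && (#|S0 U| == i)]| =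
  'C(\sum_(j < n) a j, i).
Proof.
rewrite -card_ysig -card_draws -(card_imset _ mkA_inj).
apply: eq_card => U; rewrite !inE; apply/idP/idP.
  move=> /andP[/andP[tU zU] cU]; have [eU _] := typeAB_inv tU.
  rewrite (negbTE zU) in eU; apply/imsetP; exists (Yp U) => //.
  by rewrite inE -card_S0_mkA -eU.
move=> /imsetP[P]; rewrite inE => cP ->.
by rewrite typeAB_mkA mkA_z card_S0_mkA cP.
Qed.

Lemma cAB1 i : #|[pred U | typeAB U && (zz \in U) && (#|S0 U| == i)]| =
  #|[set P : {set ysig} | (P != set0) && (#|P|.+1 == i)]|.
Proof.
rewrite -(card_imset _ zmkA_inj).
apply: eq_card => U; rewrite !inE; apply/idP/idP.
  move=> /andP[/andP[tU zU] cU]; have [eU ne] := typeAB_inv tU.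
  rewrite zU in eU; apply/imsetP; exists (Yp U) => //.
  by rewrite inE ne // -card_S0_zmkA -eU.
move=> /imsetP[P]; rewrite inE => /andP[ne cP] ->.
by rewrite typeAB_zmkA // setU11 card_S0_zmkA cP.
Qed.

Lemma cC i : #|[pred U | typeC U && (#|U :\ zz| == i)]| =
  #|[set K : {set 'I_n} | (K != set0) && (#|K| == i)]|.
Proof.
rewrite -(card_imset _ mkC_inj).
apply: eq_card => U; rewrite !inE; apply/idP/idP.
  move=> /andP[tU cU]; have [eU ne] := typeC_inv tU.
  apply/imsetP; exists [set i | xv i \in U] => //.
  by rewrite inE ne -card_mkC -eU.
move=> /imsetP[K]; rewrite inE => /andP[ne cK] ->.
by rewrite typeC_mkC // card_mkC cK.
Qed.


Lemma sumU i : (\sum_(U : {set T}) tor_dim E F i (ind U) =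
  'C(\sum_(j < n) a j, i) + #|[set P : {set ysig} | (P != set0) && (#|P|.+1 == i)]| +
  #|[set K : {set 'I_n} | (K != set0) && (#|K| == i)]|)%N.
Proof.
rewrite (eq_bigr (fun U =>
  ([pred U | typeAB U && (zz \notin U) && (#|S0 U| == i)] U : nat) +
  ([pred U | typeAB U && (zz \in U) && (#|S0 U| == i)] U : nat) +
  ([pred U | typeC U && (#|U :\ zz| == i)] U : nat))%N); last first.
  move=> U _; rewrite tor_U /=.
  by case: (typeAB U); case: (zz \in U); case: (_ == i); case: (typeC U && _).
by rewrite !big_split /= !sum_bool cAB0 cAB1 cC.
Qed.


Lemma betti_sum N i : (0 < N)%N ->
  betti_partial E F i N = (\sum_(U : {set T}) tor_dim E F i (ind U))%N.
Proof.
move=> N0; rewrite /betti_partial.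
rewrite (bigID (fun d : {ffun T -> 'I_N.+1} => [forall v, (d v <= 1)%N])) /=.
rewrite [X in (_ + X)%N]big1 ?addn0; last first.
  move=> d /forallPn[v]; rewrite -ltnNge => h.
  apply: (@cone _ E F (fun v => nat_of_ord (d v)) v); first exact: ltnW.
  by left.
pose h := fun U : {set T} => [ffun v => (inord (v \in U) : 'I_N.+1)].
pose h' := fun d : {ffun T -> 'I_N.+1} => [set v | (0 < d v)%N].
rewrite (reindex_onto h h'); last first.
  move=> d /forallP hd; apply/ffunP => v; rewrite ffunE inE; apply/val_inj => /=.
  rewrite inordK; last by case: (0 < d v)%N.
  by move: (hd v); case: (nat_of_ord (d v)) => [|[|]].
rewrite (eq_bigl (fun _ => true)); last first.
  move=> U; apply/andP; split.
    by apply/forallP => v; rewrite ffunE inordK //; case: (v \in U).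
  apply/eqP/setP => v; rewrite inE ffunE inordK; last by case: (v \in U).
  by case: (v \in U).
apply: eq_bigr => U _; congr tor_dim.
apply: functional_extensionality => v; rewrite ffunE inordK //.
by case: (v \in U).
Qed.

End Tree.

End Aux.
Import Aux.
Unset Implicit Arguments. Set Strict Implicit. Set Printing Implicit Defensive.

Lemma card_ne (I : finType) j :
  #|[set P : {set I} | (P != set0) && (#|P| == j)]| = if j is 0 then 0 else 'C(#|I|, j).
Proof.
case: j => [|j].
  apply: eq_card0 => P; rewrite inE; apply/negP => /andP[ne /eqP c].
  by move: ne; rewrite -cards_eq0 c.
rewrite -card_draws; apply: eq_card => P; rewrite !inE.
case: (eqVneq #|P| j.+1) => [c|] /=; rewrite ?andbF // andbT.
by rewrite -cards_eq0 c.
Qed.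

Theorem mainTheorem8 (F : fieldType) (n : nat) (a : 'I_n -> nat)
  (diam4 : exists i j : 'I_n, [/\ i != j, 0 < a i & 0 < a j]) :
  let l := (\sum_(i < n) a i)%N in
  [/\ is_betti (tree_edge a) F 0 1,
      is_betti (tree_edge a) F 1 (l + n),
      (forall i, 1 < i -> is_betti (tree_edge a) F i ('C(l.+1, i) + 'C(n, i)))
    & is_projdim (tree_edge a) F (maxn l.+1 n)].
Proof.
move=> l.
have key : forall i, is_betti (tree_edge a) F i
   ('C(l, i) + #|[set P : {set ysig a} | (P != set0) && (#|P|.+1 == i)]| +
    #|[set K : {set 'I_n} | (K != set0) && (#|K| == i)]|)%N.
  move=> i; exists 1%N => N hN; by rewrite betti_sum // sumU.
have shift : forall k, #|[set P : {set ysig a} | (P != set0) && (#|P|.+1 == k.+1)]| =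
    (if k is 0 then 0 else 'C(l, k))%N.
  by move=> k; rewrite /l -card_ysig -card_ne; apply: eq_card => P; rewrite !inE eqSS.
have high : forall i, 1 < i -> is_betti (tree_edge a) F i ('C(l.+1, i) + 'C(n, i)).
  case=> [|[|k]] // _; have := key k.+2; rewrite shift card_ne card_ord.
  by rewrite binS.
split => //.
- have := key 0%N.
  have -> : #|[set P : {set ysig a} | (P != set0) && (#|P|.+1 == 0)]| = 0%N.
    by apply: eq_card0 => P; rewrite inE andbF.
  by rewrite card_ne bin0.
- by have := key 1%N; rewrite (shift 0%N) card_ne card_ord /= !bin1 addn0.
have [i [j [_ ai _]]] := diam4.
have l1 : (0 < l)%N by rewrite /l (bigD1 i) //=; apply: leq_trans ai (leq_addr _ _).
split.
  exists ('C(l.+1, maxn l.+1 n) + 'C(n, maxn l.+1 n))%N; last first.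
    apply: high; apply: leq_trans (leq_maxl _ _); by rewrite ltnS.
  case: (leqP n l.+1) => h.
    by rewrite binn.
  by rewrite binn addn1.
move=> k hk; have := high k; rewrite !bin_small.
- by move=> H; apply: H; apply: leq_ltn_trans hk; apply: leq_trans (leq_maxl _ _).
- by apply: leq_ltn_trans hk; apply: leq_maxr.
- by apply: leq_ltn_trans hk; apply: leq_maxl.
Qed.
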